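(* Let $f(x_1,x_2,x_3)\in\mathbf{Z}[x_1,x_2,x_3]$ be a polynomial of degree two with coprime coefficients and let $B\ge1$. Then at least one of the following holds: (i) $\|f\|=O(B^{20})$ (with an absolute implied constant); (ii) there is a quadratic polynomial $g\in\mathbf{Z}[x_1,x_2,x_3]$, not proportional to $f$, such that $g(\mathbf{a})=0$ for every $\mathbf{a}\in\mathbf{Z}^3\cap[-B,B]^3$ with $f(\mathbf{a})=0$.
   Context: For a polynomial $P$, $\|P\|$ denotes the maximum modulus of its coefficients. *)

(* Defs.v *)
From mathcomp Require Import all_boot all_order all_algebra.
From mathcomp Require Import mpoly.
From mathcomp Require Import reals.
Set Implicit Arguments. Unset Strict Implicit. Unset Printing Implicit Defensive.
Import Order.TTheory GRing.Theory Num.Theory.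
Local Open Scope ring_scope.

(* Polynomials in Z[x1,x2,x3] are {mpoly int[3]}; msize p = 1 + total degree
   (msize 0 = 0), so "degree two" is msize p = 3. *)

Definition coef_norm (p : {mpoly int[3]}) : nat :=
  \max_(m <- msupp p) `|p@_m|%N.

Definition coprime_coefs (p : {mpoly int[3]}) : bool :=
  (\big[gcdn/0%N]_(m <- msupp p) `|p@_m|%N) == 1%N.

Definition proportional (f g : {mpoly int[3]}) : Prop :=
  exists a b : int, ((a != 0) || (b != 0)) /\ a *: g = b *: f.

Definition in_box (R : realType) (B : R) (a : 'I_3 -> int) : Prop :=
  forall i, `|(a i)%:~R| <= B.

(* Main.v *)
Require Import Defs.
From mathcomp Require Import all_boot all_order all_algebra.
From mathcomp Require Import mpoly.
From mathcomp Require Import reals.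
From mathcomp Require Import all_fingroup zify.
Set Implicit Arguments. Unset Strict Implicit. Unset Printing Implicit Defensive.
Import Order.TTheory GRing.Theory Num.Theory.

Definition codeN (a b c : nat) : nat :=
  if a == 0 then (if b == 0 then c else if b == 1 then 3 + c else 5)
  else if a == 1 then (if b == 0 then 6 + c else 8) else 9.

Definition dec (k : nat) : nat * nat * nat :=
  nth (0,0,0) [:: (0,0,0); (0,0,1); (0,0,2); (0,1,0); (0,1,1); (0,2,0);
                 (1,0,0); (1,0,1); (1,1,0); (2,0,0)] k.

Lemma decK a b c : a + b + c <= 2 -> dec (codeN a b c) = (a, b, c) /\ codeN a b c < 10.
Proof.
case: a => [|[|[|a]]]; case: b => [|[|[|b]]]; case: c => [|[|[|c]]] => //= H; try (exfalso; lia).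
Qed.

Lemma mdeg3 (m : 'X_{1..3}) : mdeg m = m ord0 + m (lift ord0 ord0) + m (lift ord0 (lift ord0 ord0)).
Proof. by rewrite mdegE !big_ord_recl big_ord0 addn0 addnA. Qed.

Lemma cardT : #|{: 'X_{1..3 < 3}}| <= 10.
Proof.
pose h (t : 'X_{1..3 < 3}) : 'I_10 :=
  inord (codeN (t ord0) (t (lift ord0 ord0)) (t (lift ord0 (lift ord0 ord0)))).
rewrite -(card_ord 10); apply: (@leq_card _ _ h) => t t' E.
have Ht := bmdeg t; have Ht' := bmdeg t'; rewrite mdeg3 in Ht; rewrite mdeg3 in Ht'.
have H1 : t ord0 + t (lift ord0 ord0) + t (lift ord0 (lift ord0 ord0)) <= 2 by lia.
have H2 : t' ord0 + t' (lift ord0 ord0) + t' (lift ord0 (lift ord0 ord0)) <= 2 by lia.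
have [d1 c1] := decK H1.
have [d2 c2] := decK H2.
move/(congr1 val): E; rewrite /h /= !inordK // => E.
move: d1; rewrite E d2 => [[e1 e2 e3]].
apply/val_inj/mnmP => i.
case: i => [[|[|[|i]]]] Hi //.
- by have -> : Ordinal Hi = ord0 by apply/val_inj.
- by have -> : Ordinal Hi = lift ord0 ord0 by apply/val_inj.
- by have -> : Ordinal Hi = (lift ord0 (lift ord0 ord0)) by apply/val_inj.
Qed.

Local Open Scope ring_scope.

Section LA.
Variable F : fieldType.

Lemma cof_col_mx r (A : 'M[F]_(r, r.+1)) (w w' : 'rV_(r.+1)) j :
  cofactor (col_mx w A : 'M_(r.+1)) 0 j = cofactor (col_mx w' A : 'M_(r.+1)) 0 j.
Proof.
rewrite /cofactor; congr (_ * _); congr (\det _).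
apply/matrixP => i l; rewrite !mxE.
case: splitP => k; last by [].
rewrite ord1 /= => /eqP; by rewrite /bump /=.
Qed.

Lemma col_mx0 r (A : 'M[F]_(r, r.+1)) (w : 'rV_(r.+1)) j :
  (col_mx w A : 'M_(r.+1)) 0 j = w 0 j.
Proof.
rewrite mxE; case: splitP => k; first by rewrite !ord1.
by case: k.
Qed.

Lemma det_col_mx_lin r (A : 'M[F]_(r, r.+1)) (w : 'rV_(r.+1)) :
  \det (col_mx w A : 'M_(r.+1)) =
  \sum_j w 0 j * \det (col_mx (delta_mx 0 j : 'rV_(r.+1)) A : 'M_(r.+1)).
Proof.
rewrite (expand_det_row _ 0); apply: eq_bigr => j _.
congr (_ * _); first by rewrite col_mx0.
rewrite (expand_det_row _ 0) (bigD1 j) //= big1 ?addr0.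
  by rewrite col_mx0 mxE !eqxx mul1r (cof_col_mx A w (delta_mx 0 j : 'rV_(r.+1))).
by move=> l /negPf nl; rewrite col_mx0 mxE nl andbF mul0r.
Qed.

Definition cofv r (A : 'M[F]_(r, r.+1)) : 'rV_(r.+1) :=
  \row_j \det (col_mx (delta_mx 0 j : 'rV_(r.+1)) A : 'M_(r.+1)).

Lemma cofv_ker r (A : 'M[F]_(r, r.+1)) : cofv A *m A^T = 0.
Proof.
apply/matrixP => z i; rewrite !mxE ord1.
transitivity (\det (col_mx (row i A) A : 'M_(r.+1))).
  rewrite det_col_mx_lin; apply: eq_bigr => j _; rewrite !mxE mulrC.
  by [].
have nl : (0 : 'I_(r.+1)) != lift 0 i by rewrite neq_lift.
rewrite (determinant_alternate nl) //.
move=> l; rewrite col_mx0 mxE.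
rewrite mxE; case: splitP => k; first by rewrite ord1.
by rewrite /= /bump /= => [[/val_inj ->]].
Qed.

Lemma cofv_neq0 r (A : 'M[F]_(r, r.+1)) : row_free A -> cofv A != 0.
Proof.
move=> fA.
have [j nj] : exists j, ~~ ((delta_mx 0 j : 'rV_(r.+1)) <= A)%MS.
  suff /forallPn[j nj] : ~~ [forall j, ((delta_mx 0 j : 'rV_(r.+1)) <= A)%MS] by exists j.
  apply/negP => /forallP H.
  have : (1%:M <= A)%MS by apply/row_subP => j; rewrite row1 H.
  move/mxrankS; rewrite mxrank1 => H2.
  by have := leq_trans H2 (rank_leq_row A); rewrite ltnn.
apply/negP => /eqP /matrixP /(_ 0 j); rewrite !mxE => /eqP.
apply/negP; rewrite -unitfE -unitmxE -row_free_unit /row_free.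
rewrite eqn_leq rank_leq_row /=.
have -> : \rank (col_mx (delta_mx 0 j : 'rV_(r.+1)) A : 'M_(r.+1)) = \rank ((delta_mx 0 j : 'rV_(r.+1)) + A)%MS.
  by rewrite addsmxE.
rewrite -{1}(eqP fA).
have := mxrank_leqif_sup (addsmxSr (delta_mx 0 j : 'rV_(r.+1)) A).
move/ltn_leqif => ->.
by rewrite addsmx_sub submx_refl andbT.
Qed.

Definition entries_of n m k (X : 'M[F]_n) (M : 'M[F]_(m, k)) :=
  forall i l, X i l = 0 \/ X i l = 1 \/ exists r l', X i l = M r l'.

Lemma core2 r n (A : 'M[F]_(r, n)) : n = r.+1 -> row_free A ->
  exists v : 'rV_n, v != 0 /\ v *m A^T = 0 /\
    forall j, exists X : 'M_n, v 0 j = \det X /\ entries_of X A.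
Proof.
move=> E; subst n => fA; exists (cofv A); split; first exact: cofv_neq0.
split; first exact: cofv_ker.
move=> j; exists (col_mx (delta_mx 0 j : 'rV_(r.+1)) A : 'M_(r.+1)).
split; first by rewrite mxE.
move=> i l; rewrite mxE; case: splitP => k _.
  by rewrite mxE; case: (_ && _); [right; left | left].
by right; right; exists k, l.
Qed.

Lemma core n k (M : 'M[F]_(k, n)) (u : 'rV_n) : u != 0 -> u *m M^T = 0 ->
  (exists w : 'rV_n, w *m M^T = 0 /\ ~~ (w <= u)%MS) \/
  (exists v : 'rV_n, (v <= u)%MS /\ v != 0 /\
     forall j, exists X : 'M_n, v 0 j = \det X /\ entries_of X M).
Proof.
move=> u0 uM.
have uK : (u <= kermx M^T)%MS by apply/sub_kermxP.
case: (boolP (kermx M^T <= u)%MS) => Ku; last first.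
  left; case/row_subPn: Ku => i ni; exists (row i (kermx M^T)); split => //.
  by apply/sub_kermxP; rewrite row_sub.
right.
have rK := mxrankS Ku; rewrite rank_rV u0 mxrank_ker mxrank_tr in rK.
have rK2 := mxrankS uK; rewrite rank_rV u0 mxrank_ker mxrank_tr in rK2.
have E : n = (\rank M).+1.
  have := rank_leq_col M; lia.
set A := rowsub (maxrankfun M) M.
have fA : row_free A := maxrowsub_free M.
have [v [v0 [vA vX]]] := core2 E fA.
have uA : u *m A^T = 0.
  apply/matrixP => z i; rewrite !mxE; move/matrixP: uM => /(_ z (maxrankfun M i)).
  rewrite !mxE => H; rewrite -[RHS]H; apply: eq_bigr => j _; rewrite !mxE.
  by [].
have rA : \rank A = \rank M by rewrite (eq_maxrowsub M).
have uKA : (u <= kermx A^T)%MS by apply/sub_kermxP.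
have vKA : (v <= kermx A^T)%MS by apply/sub_kermxP.
have KAu : (kermx A^T <= u)%MS.
  rewrite -(mxrank_leqif_sup uKA).2 mxrank_ker mxrank_tr rA rank_rV u0.
  apply/eqP; lia.
exists v; split; first exact: submx_trans KAu.
split => // j; have [X [-> XA]] := vX j; exists X; split => // i l.
case: (XA i l) => [->|[->|[r' [l' ->]]]]; [by left|by right;left|].
by right; right; exists (maxrankfun M r'), l'; rewrite mxE.
Qed.

End LA.

Lemma det_bound (R : numDomainType) n (X : 'M[R]_n) K :
  (forall i l, `|X i l| <= K) -> `|\det X| <= (n`!)%:R * K ^+ n.
Proof.
move=> HX; rewrite /determinant.
apply: (le_trans (ler_norm_sum _ _ _)).
have -> : (n`!)%:R * K ^+ n = \sum_(s : 'S_n) K ^+ n.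
  by rewrite sumr_const card_Sn mulr_natl.
apply: ler_sum => s _.
rewrite normrM normrX normrN normr1 expr1n mul1r normr_prod.
rewrite -[X in K ^+ X](card_ord n) -prodr_const.
apply: ler_prod => i _; by rewrite normr_ge0 HX.
Qed.

Lemma det_int n (X : 'M[rat]_n) :
  (forall i l, X i l \is a Num.int) -> \det X \is a Num.int.
Proof.
move=> HX; rewrite /determinant; apply: rpred_sum => s _.
apply: rpredM; first by apply: rpredX; apply: rpredN; exact: rpred1.
by apply: rpred_prod => i _; exact: HX.
Qed.

Notation T := ('X_{1..3 < 3}).
Notation nT := #|{: T}|.

Definition mon (t : 'X_{1..3}) (a : 'I_3 -> int) : int := \prod_(i < 3) a i ^+ t i.

Definition idx (j : 'I_nT) : 'X_{1..3} := bmnm (enum_val j).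

Lemma evalT (g : {mpoly int[3]}) a : (msize g <= 3)%N ->
  g.@[a] = \sum_(j < nT) g@_(idx j) * mon (idx j) a.
Proof.
move=> H; rewrite {1}(mpolywE H) raddf_sum /= (big_enum_val (A := predT)) /=.
apply: eq_bigr => j _; by rewrite mevalZ mevalX.
Qed.

Lemma mon_bound (Nb : nat) t a : (mdeg t < 3)%N -> (1 <= Nb)%N ->
  (forall i, `|a i| <= Nb%:Z) -> `|mon t a| <= (Nb ^ 2)%:Z.
Proof.
move=> dt N1 Ha; rewrite /mon normr_prod.
apply: (@le_trans _ _ (\prod_(i < 3) (Nb%:Z) ^+ t i)).
  apply: ler_prod => i _; rewrite normrX exprn_ge0 //=.
  by apply: lerXn2r; rewrite ?nnegrE //.
rewrite prodrXr -mdegE -natz -natrX natz lez_nat leq_pexp2l //; lia.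
Qed.

Section S.
Variables (f : {mpoly int[3]}) (Nb : nat).

Definition PT := {ffun 'I_3 -> 'I_(Nb.*2.+1)}.
Definition pt (p : PT) : 'I_3 -> int := fun i => (p i)%:Z - Nb%:Z.
Notation nP := #|{: PT}|.

Definition Mx : 'M[rat]_(nP, nT) :=
  \matrix_(i, j) (if f.@[pt (enum_val i)] == 0
                  then (mon (idx j) (pt (enum_val i)))%:~R else 0).

Definition vec (g : {mpoly int[3]}) : 'rV[rat]_nT := \row_j (g@_(idx j))%:~R.

Lemma vecM g i : (msize g <= 3)%N ->
  (vec g *m Mx^T) 0 i =
  if f.@[pt (enum_val i)] == 0 then (g.@[pt (enum_val i)])%:~R else 0.
Proof.
move=> Hg; rewrite mxE (evalT _ Hg) rmorph_sum /=.
case: ifP => H.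
  by apply: eq_bigr => j _; rewrite !mxE /= H rmorphM.
by rewrite big1 // => j _; rewrite !mxE /= H mulr0.
Qed.

Lemma pt_box p i : `|pt p i| <= Nb%:Z.
Proof.
rewrite /pt; have := ltn_ord (p i); move: (nat_of_ord (p i)) => x hx.
by apply/ler_normlP; split; lia.
Qed.

Lemma box_pt a : (forall i, `|a i| <= Nb%:Z) -> exists p : PT, pt p =1 a.
Proof.
move=> Ha.
have Hl i : (absz (a i + Nb%:Z)%R < Nb.*2.+1)%N.
  have := Ha i; move: (a i) => x /ler_normlP [h1 h2]; lia.
exists [ffun i => Ordinal (Hl i)] => i; rewrite /pt ffunE /=.
have := Ha i; move: (a i) => x /ler_normlP [h1 h2].
rewrite gez0_abs; first by rewrite addrK.
lia.
Qed.

Lemma Mx_int i j : Mx i j \is a Num.int.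
Proof. by rewrite mxE; case: ifP => _; [exact: intr_int | exact: int_num0]. Qed.

Lemma Mx_bound i j : (1 <= Nb)%N -> `|Mx i j| <= ((Nb ^ 2)%N)%:R.
Proof.
move=> N1; rewrite mxE; case: ifP => _; last by rewrite normr0 ler0n.
rewrite -intr_norm (_ : ((Nb ^ 2)%N)%:R = ((Nb ^ 2)%N%:Z)%:~R) // ler_int.
apply: mon_bound => //; first exact: bmdeg.
by move=> k; apply: pt_box.
Qed.

End S.

Lemma idx_inj : injective idx.
Proof. by move=> j j' /val_inj /enum_val_inj. Qed.

Lemma idx_surj m : (mdeg m < 3)%N -> exists j, idx j = m.
Proof. by move=> H; exists (enum_rank (BMultinom H)); rewrite /idx enum_rankK. Qed.

Lemma den_dvd (mu : rat) (z : int) :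
  mu * z%:~R \is a Num.int -> (`|denq mu| %| `|z|)%N.
Proof.
case/intrP => w Hw.
have E : numq mu * z = w * denq mu.
  apply/eqP; rewrite -(eqr_int rat) !rmorphM /= numqE -Hw; apply/eqP.
  by rewrite mulrAC.
have : (`|denq mu| %| `|numq mu| * `|z|)%N by rewrite -abszM E abszM dvdn_mull.
by rewrite Gauss_dvdr // coprime_sym coprime_num_den.
Qed.

Lemma dvd_biggcd (s : seq 'X_{1..3}) (F : 'X_{1..3} -> nat) d :
  (forall m, m \in s -> (d %| F m)%N) -> (d %| \big[gcdn/0%N]_(m <- s) F m)%N.
Proof.
elim: s => [|x s IH] H; first by rewrite big_nil dvdn0.
rewrite big_cons dvdn_gcd H ?mem_head //= IH // => m ms.
by apply: H; rewrite in_cons ms orbT.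
Qed.

Lemma clear_den n (w : 'rV[rat]_n) :
  exists2 D : int, D != 0 & forall j, D%:~R * w 0 j \is a Num.int.
Proof.
exists (\prod_j denq (w 0 j)).
  by apply/prodf_neq0 => j _; rewrite denq_neq0.
move=> j; rewrite (bigD1 j) //= rmorphM /= mulrAC [X in X * _]mulrC -numqE.
by apply: rpredM; apply: intr_int.
Qed.

Lemma vecZ (a : int) g : vec (a *: g) = a%:~R *: vec g.
Proof. by apply/rowP => j; rewrite !mxE mcoeffZ rmorphM. Qed.

Lemma poly_main (f : {mpoly int[3]}) (Nb : nat) :
  msize f = 3%N -> coprime_coefs f -> (1 <= Nb)%N ->
  (coef_norm f <= 10`! * Nb ^ 20)%N \/
  (exists g : {mpoly int[3]}, msize g = 3%N /\ ~ proportional f g /\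
     forall a : 'I_3 -> int, (forall i, `|a i| <= Nb%:Z) ->
       f.@[a] = 0 -> g.@[a] = 0).
Proof.
move=> f3 cf N1.
have f3' : (msize f <= 3)%N by rewrite f3.
have [m2 m2s m2d] : exists2 m2, m2 \in msupp f & mdeg m2 = 2%N.
  case: (boolP (has (fun m => mdeg m == 2%N) (msupp f))) => [/hasP[m ms /eqP md]|/hasPn H].
    by exists m.
  exfalso; suff : (msize f <= 2)%N by rewrite f3.
  rewrite msizeE; apply/bigmax_leqP_seq => m ms _.
  have := msize_mdeg_lt ms; rewrite f3 => lt3; have := H m ms; lia.
have [j2 ij2] : exists j, idx j = m2 by apply: idx_surj; rewrite m2d.
set u := vec f.
have fm2 : f@_m2 != 0 by rewrite -mcoeff_msupp.
have u0 : u 0 j2 != 0 by rewrite mxE ij2 intr_eq0.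
have un0 : u != 0 by apply: contraNneq u0 => ->; rewrite mxE.
have uM : u *m (Mx f Nb)^T = 0.
  apply/matrixP => z i; rewrite ord1 vecM // mxE; case: ifP => // /eqP ->.
  by rewrite mulr0z.
case: (core un0 uM) => [[w [wM wu]]|[v [vu [v0 vX]]]].
  pose w' := if w 0 j2 == 0 then w + u else w.
  have w'M : w' *m (Mx f Nb)^T = 0.
    by rewrite /w'; case: ifP => _; rewrite ?mulmxDl wM ?uM ?addr0.
  have w'u : ~~ (w' <= u)%MS.
    rewrite /w'; case: ifP => _ //; apply: contra wu => /sub_rVP [c Hc].
    apply/sub_rVP; exists (c - 1); by rewrite scalerBl scale1r -Hc addrK.
  have w'j2 : w' 0 j2 != 0.
    by rewrite /w'; case: ifP => [/eqP h|->//]; rewrite mxE h add0r.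
  have [D D0 DI] := clear_den w'.
  pose c j := numq (D%:~R * w' 0 j).
  have cE j : (c j)%:~R = D%:~R * w' 0 j by rewrite /c numqK //; exact: DI.
  pose g : {mpoly int[3]} := \sum_j c j *: 'X_[idx j].
  have gcj j : g@_(idx j) = c j.
    rewrite /g raddf_sum (bigD1 j) //= mcoeffZ mcoeffX eqxx mulr1 big1 ?addr0 //.
    by move=> l lj; rewrite mcoeffZ mcoeffX (inj_eq idx_inj) (negPf lj) mulr0.
  have vg : vec g = D%:~R *: w' by apply/rowP => j; rewrite !mxE gcj cE.
  have g3 : (msize g <= 3)%N.
    apply: leq_trans (msize_sum _ _ _) _; apply/bigmax_leqP_seq => j _ _.
    by apply: leq_trans (msizeZ_le _ _) _; rewrite msizeX; exact: bmdeg.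
  right; exists g; split.
    apply/eqP; rewrite eqn_leq g3 /=.
    have : idx j2 \in msupp g.
      by rewrite mcoeff_msupp gcj -(intr_eq0 rat) cE mulf_neq0 // intr_eq0.
    by move/msize_mdeg_lt; rewrite ij2 m2d.
  split.
    case=> a [b [ab E]].
    case: (eqVneq a 0) => [a0|a0].
      move: ab E; rewrite a0 eqxx /= scale0r => b0 /esym /(congr1 (mcoeff m2)).
      by rewrite mcoeffZ mcoeff0 => /eqP; rewrite mulf_eq0 (negPf b0) (negPf fm2).
    have : (vec g <= u)%MS.
      apply/sub_rVP; exists (b%:~R / a%:~R).
      have := congr1 vec E; rewrite !vecZ => E2.
      rewrite /u mulrC -scalerA -E2 scalerA mulVf ?scale1r // intr_eq0 //.
    rewrite vg => /sub_rVP [k Hk]; move: w'u; apply/negP/negPn/sub_rVP.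
    exists (D%:~R^-1 * k); rewrite -scalerA -Hk scalerA mulVf ?scale1r //.
    by rewrite intr_eq0.
  move=> a Ha fa; have [p Hp] := box_pt Ha.
  have := vecM f (enum_rank p) g3; rewrite enum_rankK !(meval_eq _ Hp) fa eqxx.
  rewrite vg -scalemxAl w'M scaler0 mxE => /esym /eqP; rewrite intr_eq0 => /eqP.
  by [].
have [mu Emu] := sub_rVP vu.
have vint j : v 0 j \is a Num.int.
  have [X [-> XE]] := vX j; apply: det_int => i l.
  case: (XE i l) => [->|[->|[r' [l' ->]]]]; [exact: int_num0|exact: int_num1|].
  exact: Mx_int.
have vbd j : `|v 0 j| <= ((10`! * Nb ^ 20)%N)%:R.
  have [X [-> XE]] := vX j.
  apply: le_trans (det_bound (K := ((Nb ^ 2)%N)%:R) _) _.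
    move=> i l; case: (XE i l) => [->|[->|[r' [l' ->]]]].
    - by rewrite normr0 ler0n.
    - by rewrite normr1 ler1n expn_gt0 N1.
    - exact: Mx_bound.
  rewrite -natrX -natrM ler_nat leq_mul // ?leq_fact ?cardT //.
  by rewrite -expnM leq_pexp2l //; have := cardT; lia.
have dv m : m \in msupp f -> (`|denq mu| %| `|f@_m|)%N.
  move=> ms; have [j ij] : exists j, idx j = m.
    by apply: idx_surj; have := msize_mdeg_lt ms; rewrite f3.
  have := vint j; rewrite Emu !mxE ij; exact: den_dvd.
have d1 : denq mu = 1.
  have := dvd_biggcd dv; move/eqP: cf => ->; rewrite dvdn1 => /eqP h.
  by apply/eqP; rewrite -(gtz0_abs (denq_gt0 mu)) h.
have muE : mu = (numq mu)%:~R by rewrite numqE d1 mulr1.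
have nmu : numq mu != 0.
  apply: contraNneq v0 => h; by rewrite Emu muE h scale0r.
left; rewrite /coef_norm; apply/bigmax_leqP_seq => m ms _.
have [j ij] : exists j, idx j = m.
  by apply: idx_surj; have := msize_mdeg_lt ms; rewrite f3.
have := vbd j; rewrite Emu !mxE ij muE -rmorphM -intr_norm.
rewrite (_ : ((10`! * Nb ^ 20)%N)%:R = ((10`! * Nb ^ 20)%N%:Z)%:~R) // ler_int.
rewrite -abszE lez_nat abszM => h; apply: leq_trans h.
by rewrite leq_pmull // absz_gt0.
Qed.

Theorem lemma12 (R : realType) :
  exists C : R, 0 < C /\
  forall (f : {mpoly int[3]}) (B : R),
    msize f = 3%N -> coprime_coefs f -> 1 <= B ->
    ((coef_norm f)%:R <= C * B ^+ 20) \/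
    (exists g : {mpoly int[3]},
        msize g = 3%N /\ ~ proportional f g /\
        forall a : 'I_3 -> int, in_box B a -> f.@[a] = 0 -> g.@[a] = 0).
Proof.
exists (10`!)%:R; split; first by rewrite ltr0n fact_gt0.
move=> f B f3 cf B1.
have z1 : 1 <= Num.floor B by rewrite Num.Theory.floor_ge_int.
pose Nb := `|Num.floor B|%N.
have zE : Nb%:Z = Num.floor B by rewrite /Nb gez0_abs // (le_trans _ z1).
have zB : (Nb%:R : R) <= B.
  by rewrite (_ : Nb%:R = (Nb%:Z)%:~R) // zE Num.Theory.floor_le.
have N1 : (1 <= Nb)%N by rewrite -lez_nat zE.
case: (poly_main f3 cf N1) => [H|[g [g3 [gp gv]]]].
  left; apply: le_trans (_ : ((10`! * Nb ^ 20)%N)%:R <= _).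
    by rewrite ler_nat.
  rewrite natrM natrX ler_pM2l ?ltr0n ?fact_gt0 //.
  by apply: lerXn2r; rewrite ?nnegrE ?ler0n // (le_trans _ zB).
right; exists g; split => //; split => // a Ha fa; apply: gv => // i.
rewrite zE Num.Theory.floor_ge_int intr_norm; exact: Ha.
Qed.
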